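(* Let $s\ge 1$ be an integer and $0<\epsilon<1$ a constant. For integers $2\le n_0\le n_1\le\dots\le n_s$, let $k_i=\frac{\log n_s}{\log n_i}$ for $0\le i\le s-1$, let $x_0$ be the unique root of the equation $(s+\epsilon)x-1-\sum_{j=0}^{s-1}x^{\frac{k_j-1}{k_j}}=0$ in the interval $[1,\infty)$, and let $r=\left\lceil\frac{\log n_s}{\log x_0}\right\rceil+1$. Then $ch(K_{n_0,\dots,n_s})\le r$ for all such tuples with $n_s$ large enough (in terms of $s$ and $\epsilon$).
   Context: All logarithms are to base 2. For a graph $G=(V,E)$, the choice number $ch(G)$ is the minimum integer $k$ such that for every assignment of a list $S(v)$ of at least $k$ colors to each vertex $v\in V$, there is a proper vertex coloring of $G$ assigning to each vertex $v$ a color from $S(v)$. $K_{n_0,\dots,n_s}$ denotes the complete $(s+1)$-partite graph with parts of sizes $n_0,\dots,n_s$. *)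

(* Defs.v *)
From mathcomp Require Import all_boot.
From Stdlib Require Import Reals.

Set Implicit Arguments.
Unset Strict Implicit.
Unset Printing Implicit Defensive.

(* L-colouring with lists: each vertex v gets a list L v of colours (colours are
   natural numbers; any finite list assignment can be encoded this way). *)
Definition choosable (V : finType) (adj : rel V) (k : nat) : Prop :=
  forall L : V -> seq nat,
    (forall v, k <= size (undup (L v))) ->
    exists f : V -> nat,
      (forall v, f v \in L v) /\ (forall u v, adj u v -> f u != f v).

Definition ch_le (V : finType) (adj : rel V) (r : nat) : Prop :=
  exists k, k <= r /\ choosable adj k.

(* Complete (s+1)-partite graph K_{n_0,...,n_s}: vertex (i, a) is the a-th
   vertex of part i; two vertices are adjacent iff they lie in different parts. *)
Definition Kvert (s : nat) (n : 'I_s.+1 -> nat) : finType :=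
  {i : 'I_s.+1 & 'I_(n i)}.

Definition Kadj (s : nat) (n : 'I_s.+1 -> nat) : rel (Kvert n) :=
  fun u v => tag u != tag v.

Definition Rceil (x : R) : Z := (- Int_part (- x))%Z.

Definition kexp (s : nat) (n : 'I_s.+1 -> nat) (j : 'I_s) : R :=
  (ln (INR (n ord_max)) / ln (INR (n (widen_ord (leqnSn s) j))))%R.

Definition Fx (s : nat) (eps : R) (n : 'I_s.+1 -> nat) (x : R) : R :=
  ((INR s + eps) * x - 1
   - \big[Rplus/0%R]_(j < s) Rpower x ((kexp n j - 1) / kexp n j))%R.

Definition rbound (s : nat) (n : 'I_s.+1 -> nat) (x0 : R) : nat :=
  Z.to_nat (Rceil (ln (INR (n ord_max)) / ln x0) + 1)%Z.

(* Main.v *)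
Require Import Defs.
From mathcomp Require Import all_boot.
From Stdlib Require Import Reals.
From mathcomp Require Import all_order all_algebra.
From mathcomp Require Import Rstruct.
From mathcomp Require Import ring lra.
From Stdlib Require Znat.
Import Order.TTheory GRing.Theory Num.Theory.

Section Key.
Local Open Scope ring_scope.
Variables (V : finType) (k : nat) (part : V -> 'I_k) (L : V -> seq nat) (p : 'I_k -> R).
Hypothesis p_ge0 : forall i, 0 <= p i.
Hypothesis p_sum : \sum_i p i = 1.

Definition sat (g : nat -> 'I_k) (S : seq nat) v :=
  has (fun c => (c \notin S) && (g c == part v)) (L v).
Definition term S g v : R :=
  if sat g S v then 0 else (1 - p (part v)) ^+ count (mem S) (undup (L v)).
Definition Phi S g := \sum_(v : V) term S g v.

Lemma q_ge0 i : 0 <= 1 - p i.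
Proof.
rewrite subr_ge0 -p_sum (bigD1 i) //= lerDl; apply: sumr_ge0 => j _; exact: p_ge0.
Qed.

Lemma term_ge0 S g v : 0 <= term S g v.
Proof. rewrite /term; case: ifP => // _; apply: exprn_ge0; exact: q_ge0. Qed.

Definition upd (g : nat -> 'I_k) c i := fun x => if x == c then i else g x.

Lemma term_step c S g v : c \notin S ->
  \sum_i p i * term S (upd g c i) v = term (c :: S) g v.
Proof.
move=> cS.
have eqP' : forall x, x \in L v -> x != c ->
  forall i, ((x \notin S) && (upd g c i x == part v)) = ((x \notin c :: S) && (g x == part v)).
  by move=> x _ xc i; rewrite /upd (negbTE xc) in_cons (negbTE xc).
case: (boolP (c \in L v)) => cL; last first.
  have E : forall i, term S (upd g c i) v = term (c :: S) g v.
    move=> i; rewrite /term /sat.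
    have -> : has (fun c0 => (c0 \notin S) && (upd g c i c0 == part v)) (L v)
       = has (fun c0 => (c0 \notin c :: S) && (g c0 == part v)) (L v).
      apply: eq_in_has => x xL; apply: eqP' => //.
      by apply/eqP => xc; move: cL; rewrite -xc xL.
    congr (if _ then _ else _ ^+ _); apply: eq_in_count => x.
    rewrite mem_undup /= in_cons => xL.
    by have -> : (x == c) = false by apply/eqP => xc; move: cL; rewrite -xc xL.
  under eq_bigr => i _ do rewrite E.
  by rewrite -mulr_suml p_sum mul1r.
have cnt : count (mem (c :: S)) (undup (L v)) = (count (mem S) (undup (L v))).+1.
  have -> : count (mem (c :: S)) (undup (L v)) = count (predU (pred1 c) (mem S)) (undup (L v)).
    by apply: eq_count => x; rewrite /= in_cons.
  have := count_predUI (pred1 c) (mem S) (undup (L v)).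
  have -> : count (predI (pred1 c) (mem S)) (undup (L v)) = 0%N.
    apply/eqP; rewrite -leqn0 leqNgt -has_count; apply/hasP => -[x _] /= /andP[/eqP -> ].
    by rewrite (negbTE cS).
  rewrite addn0 count_uniq_mem ?undup_uniq // mem_undup cL => ->.
  by rewrite add1n.
have satE : forall i, sat (upd g c i) S v = (i == part v) || sat g (c :: S) v.
  move=> i; rewrite /sat; apply/idP/idP.
    case/hasP => x xL /andP[xS]; rewrite /upd; case: (eqVneq x c) => [xc|xc gx].
      by move=> /eqP <-; rewrite eqxx.
    apply/orP; right; apply/hasP; exists x => //; rewrite in_cons (negbTE xc) xS; exact: gx.
  case/orP => [/eqP ip|].
    apply/hasP; exists c; first exact: cL.
    by rewrite cS /upd eqxx ip eqxx.
  case/hasP => x xL; rewrite in_cons negb_or => /andP[/andP[xc xS] gx].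
  by apply/hasP; exists x => //; rewrite xS /upd (negbTE xc).
rewrite /term; under eq_bigr => i _ do rewrite satE.
case: (boolP (sat g (c :: S) v)) => sv.
  by apply: big1 => i _; rewrite orbT mulr0.
rewrite cnt exprS.
under eq_bigr => i _ do rewrite orbF.
rewrite (bigD1 (part v)) //= eqxx mulr0 add0r.
under eq_bigr => i /negbTE -> do rewrite /=.
rewrite -mulr_suml; congr (_ * _).
have H := p_sum; rewrite (bigD1 (part v)) //= in H.
by rewrite -H [p (part v) + _]addrC addrK.
Qed.

Lemma Phi_step c S g : c \notin S ->
  \sum_i p i * Phi S (upd g c i) = Phi (c :: S) g.
Proof.
move=> cS; rewrite /Phi.
under eq_bigr => i _ do rewrite mulr_sumr.
rewrite exchange_big /=; apply: eq_bigr => v _; exact: term_step.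
Qed.

Lemma key_ind S : uniq S -> forall g, Phi S g < 1 ->
  exists g' : nat -> 'I_k, forall v, has (fun c => g' c == part v) (L v).
Proof.
elim: S => [|c S IH] /= => [_|/andP[cS uS]] g Hg.
  exists g => v; apply: contraT => nh.
  have : term [::] g v <= Phi [::] g.
    rewrite /Phi (bigD1 v) //= lerDl; apply: sumr_ge0 => u _; exact: term_ge0.
  rewrite /term /sat.
  have -> : has (fun c => (c \notin [::]) && (g c == part v)) (L v) = false.
    by apply/negbTE; move: nh; apply: contra; apply: sub_has => x /andP[].
  move=> H; have := lt_le_trans (le_lt_trans H Hg) (lexx 1).
  by rewrite count_pred0 expr0 ltxx.
have [i Hi] : exists i, Phi S (upd g c i) < 1.
  apply/existsP; apply: contraT; rewrite negb_exists => /forallP H.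
  have : \sum_i p i <= \sum_i p i * Phi S (upd g c i).
    apply: ler_sum => i _; rewrite -{1}(mulr1 (p i)); apply: ler_wpM2l => //.
    by move: (H i); rewrite -leNgt.
  by rewrite Phi_step // p_sum => /(le_lt_trans)/(_ Hg); rewrite ltxx.
exact: (IH uS _ Hi).
Qed.

End Key.

Lemma key_color (V : finType) (k : nat) (part : V -> 'I_k.+1) (L : V -> seq nat)
  (p : 'I_k.+1 -> R) (r : nat) :
  (forall i, (0 <= p i)%R) -> (\sum_i p i = 1)%R ->
  (forall v, r <= size (undup (L v))) ->
  (\sum_(v : V) (1 - p (part v)) ^+ r < 1)%R ->
  exists f : V -> nat, (forall v, f v \in L v) /\
    (forall u v, part u != part v -> f u != f v).
Proof.
move=> p0 p1 Hr Hs.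
pose S := undup (flatten [seq L v | v <- enum V]).
have SL : forall v c, c \in L v -> c \in S.
  move=> v c cL; rewrite mem_undup; apply/flattenP; exists (L v) => //.
  by apply/mapP; exists v; rewrite ?mem_enum.
have [g Hg] : exists g : nat -> 'I_k.+1, forall v, has (fun c => g c == part v) (L v).
  apply: (@key_ind V k.+1 part L p p0 p1 S (undup_uniq _) (fun _ => ord0)).
  apply: le_lt_trans Hs; apply: ler_sum => v _.
  rewrite /term /sat.
  have -> : has (fun c => (c \notin S) && (ord0 == part v)) (L v) = false.
    apply/negbTE/hasPn => c cL; by rewrite (SL v c cL).
  have -> : count (mem S) (undup (L v)) = size (undup (L v)).
    rewrite -count_predT; apply: eq_in_count => c; rewrite mem_undup => cL.
    by rewrite /= (SL v c cL).
  apply: ler_wiXn2l; [exact: q_ge0 | | exact: Hr].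
  by rewrite lerBlDr lerDl.
exists (fun v => nth 0%N (L v) (find (fun c => g c == part v) (L v))); split.
  by move=> v; apply: mem_nth; rewrite -has_find.
move=> u v; apply: contra => /eqP E.
have Hu := nth_find 0%N (Hg u); have Hv := nth_find 0%N (Hg v).
by rewrite -(eqP Hu) -(eqP Hv) E.
Qed.

Section Aux.
Local Open Scope ring_scope.

Lemma normalize (s : nat) (q : 'I_s.+1 -> R) :
  (forall i, 0 <= q i <= 1) -> s%:R <= \sum_i q i ->
  exists p : 'I_s.+1 -> R, (forall i, 0 <= p i) /\ \sum_i p i = 1 /\
     (forall i, 1 - p i <= q i).
Proof.
move=> q01 qs.
pose X := \sum_(j | j != ord0) (1 - q j).
have HX : (1 - q ord0) + X = s.+1%:R - \sum_i q i.
  have E : \sum_i (1 - q i) = (1 - q ord0) + X by rewrite (bigD1 ord0).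
  by rewrite -E sumrB sumr_const card_ord.
have X0 : 0 <= X by apply: sumr_ge0 => j _; rewrite subr_ge0; case/andP: (q01 j).
have Xq : X <= q ord0.
  have : s.+1%:R - \sum_i q i <= 1 by rewrite -[X in X%:R - _]addn1 natrD; lra.
  rewrite -HX; lra.
exists (fun i => if i == ord0 then 1 - X else 1 - q i); split; [|split].
- move=> i; case: ifP => _; first by case/andP: (q01 ord0) => _ h; lra.
  by case/andP: (q01 i) => _ h; lra.
- rewrite (bigD1 ord0) //=.
  have -> : \sum_(i < s.+1 | i != ord0) (if i == ord0 then 1 - X else 1 - q i) = X.
    by apply: eq_bigr => j /negbTE ->.
  lra.
- by move=> i; case: ifP => [/eqP ->|_]; lra.
Qed.

Lemma sum_Kvert (s : nat) (n : 'I_s.+1 -> nat) (G : 'I_s.+1 -> R) :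
  \sum_(v : Kvert n) G (tag v) = \sum_i (n i)%:R * G i.
Proof.
have := @sig_big_dep R 0 +%R _ (fun i => 'I_(n i)) xpredT (fun _ _ => true)
   (fun i _ => G i).
rewrite /Kvert => <-.
by apply: eq_bigr => i _; rewrite sumr_const card_ord mulr_natl.
Qed.

End Aux.

Ltac rlra := Stdlib.micromega.Lra.lra.
From Stdlib Require Field_tac Ring_tac.
Import Stdlib.setoid_ring.Field_tac Stdlib.setoid_ring.Ring_tac.
Section Real.
Local Open Scope R_scope.

Lemma exp_le_mono x y : x <= y -> exp x <= exp y.
Proof. move=> h; case: (Rle_lt_or_eq_dec _ _ h) => [/exp_increasing|->]; rlra. Qed.

Lemma ln_le_mono x y : 0 < x -> x <= y -> ln x <= ln y.
Proof. move=> h0 h; case: (Rle_lt_or_eq_dec _ _ h) => [/(ln_increasing _ _ h0)|->]; rlra. Qed.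

Lemma ln_pos x : 1 < x -> 0 < ln x.
Proof. move=> h; rewrite -ln_1; apply: ln_increasing; rlra. Qed.

Lemma INR_ge2 m : (2 <= m)%nat -> 2 <= INR m.
Proof. by move=> /ssrnat.leP h; apply: (le_INR 2). Qed.

Lemma sumR_const (s : nat) (c : R) : \big[Rplus/0]_(j < s) c = INR s * c.
Proof.
change (\sum_(j < s) c = INR s * c)%R.
by rewrite sumr_const card_ord INRE GRing.mulr_natl.
Qed.

Lemma sumR_le (s : nat) (F G : 'I_s -> R) : (forall j, F j <= G j) ->
  \big[Rplus/0]_(j < s) F j <= \big[Rplus/0]_(j < s) G j.
Proof.
move=> h; apply/RleP; change (\sum_(j < s) F j <= \sum_(j < s) G j)%R.
by apply: ler_sum => j _; apply/RleP.
Qed.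

Lemma x0_facts (s : nat) (eps : R) (n : 'I_s.+1 -> nat) (x0 : R) :
  0 < eps < 1 -> (forall i, (2 <= n i)%nat) ->
  (forall j : 'I_s, (n (widen_ord (leqnSn s) j) <= n ord_max)%nat) ->
  1 <= x0 -> Fx eps n x0 = 0 -> 1 < x0 /\ eps * x0 <= 1.
Proof.
move=> [e0 e1] n2 mono hx hF.
have hS : \big[Rplus/0]_(j < s) Rpower x0 ((kexp n j - 1) / kexp n j) = (INR s + eps) * x0 - 1.
  by move: hF; rewrite /Fx; rlra.
split.
  case: (Rle_lt_or_eq_dec _ _ hx) => // hx1; rewrite -hx1 in hS.
  have : \big[Rplus/0]_(j < s) Rpower 1 ((kexp n j - 1) / kexp n j) = INR s.
    rewrite -[RHS]Rmult_1_r -sumR_const; apply: eq_bigr => j _.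
    by rewrite /Rpower ln_1 Rmult_0_r exp_0.
  rlra.
have : \big[Rplus/0]_(j < s) Rpower x0 ((kexp n j - 1) / kexp n j) <= INR s * x0.
  rewrite -sumR_const; apply: sumR_le => j.
  rewrite -{2}(Rpower_1 x0); last rlra.
  apply: Rle_Rpower => //.
  have kp : 0 < kexp n j.
    rewrite /kexp; apply: Rdiv_lt_0_compat; apply: ln_pos;
    have := @INR_ge2 _ (n2 (widen_ord (leqnSn s) j)); have := @INR_ge2 _ (n2 ord_max); rlra.
  apply: (Rmult_le_reg_r (kexp n j)) => //.
  rewrite /Rdiv Rmult_assoc Rinv_l; rlra.
rlra.
Qed.

End Real.

Section Real2.
Local Open Scope R_scope.

Lemma div_ineq A B r l : 0 < A -> 0 < B -> 0 < r -> 0 < l -> A < r * l -> B / r <= B * l / A.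
Proof.
move=> hA hB hr hl h.
have h1 : 0 < / r by apply: Rinv_0_lt_compat; rlra.
have h2 : 0 < / A by apply: Rinv_0_lt_compat; rlra.
have h3 : B * A <= B * (r * l) by apply: Rmult_le_compat_l; rlra.
have h4 : B * A * (/r * /A) <= B * (r * l) * (/r * /A).
  apply: Rmult_le_compat_r; [|rlra]. apply/Rlt_le/Rmult_lt_0_compat; rlra.
have -> : B / r = B * A * (/r * /A) by field; rlra.
have -> : B * l / A = B * (r * l) * (/r * /A) by field; rlra.
rlra.
Qed.

Lemma rbound_facts (s : nat) (n : 'I_s.+1 -> nat) (x0 : R) :
  1 < x0 -> 1 < INR (n ord_max) ->
  ln (INR (n ord_max)) < INR (rbound n x0) * ln x0 /\
  ln (INR (n ord_max)) / ln x0 < INR (rbound n x0).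
Proof.
move=> hx hn.
have hl := @ln_pos _ hx; have hA := @ln_pos _ hn.
set A := ln (INR (n ord_max)) in hA *.
set y := A / ln x0.
have hy : 0 < y by apply: Rdiv_lt_0_compat.
have hc : y <= IZR (Rceil y).
  rewrite /Rceil opp_IZR; have := base_Int_part (- y); rlra.
have hz : Z.le 0 (Z.add (Rceil y) 1) by apply: le_IZR; rewrite plus_IZR; rlra.
have hr : INR (rbound n x0) = IZR (Z.add (Rceil y) 1).
  by rewrite /rbound INR_IZR_INZ Znat.Z2Nat.id.
rewrite hr plus_IZR; split; last rlra.
have -> : A = y * ln x0 by rewrite /y; field; rlra.
apply: Rmult_lt_compat_r => //; rlra.
Qed.

End Real2.

Section Real3.
Local Open Scope R_scope.

Lemma sum_t (s : nat) (eps : R) (n : 'I_s.+1 -> nat) (x0 : R) :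
  0 < eps < 1 -> (forall i, (2 <= n i)%nat) ->
  (forall j : 'I_s, (n (widen_ord (leqnSn s) j) <= n ord_max)%nat) ->
  1 <= x0 -> Fx eps n x0 = 0 ->
  INR s + eps <= \big[Rplus/0]_(i < s.+1) exp (- ln (INR (n i)) / INR (rbound n x0)).
Proof.
move=> he n2 mono hx hF.
have [hx1 _] := @x0_facts _ _ _ _ he n2 mono hx hF.
have hn : 1 < INR (n ord_max) by have := @INR_ge2 _ (n2 ord_max); rlra.
have [hr1 _] := @rbound_facts _ _ _ hx1 hn.
have hl := @ln_pos _ hx1; have hA := @ln_pos _ hn.
set A := ln (INR (n ord_max)) in hA hr1 *.
set r := INR (rbound n x0) in hr1 *.
set l := ln x0 in hl hr1 *.
have hr : 0 < r.
  case: (Rle_or_lt r 0) => // h; have : r * l <= 0 * l by apply: Rmult_le_compat_r; rlra.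
  rlra.
set e := fun j => (kexp n j - 1) / kexp n j.
have hF' : (INR s + eps) * x0 - 1 - \big[Rplus/0]_(j < s) Rpower x0 (e j) = 0 := hF.
have hS : \big[Rplus/0]_(j < s) Rpower x0 (e j) = (INR s + eps) * x0 - 1 by rlra.
have hinv : / x0 = exp (- l) by rewrite exp_Ropp /l exp_ln //; rlra.
have hj : forall j : 'I_s, Rpower x0 (e j) * / x0 <=
     exp (- ln (INR (n (widen_ord (leqnSn s) j))) / r).
  move=> j; set B := ln (INR (n (widen_ord (leqnSn s) j))).
  have hB : 0 < B by apply: ln_pos; have := @INR_ge2 _ (n2 (widen_ord (leqnSn s) j)); rlra.
  rewrite hinv /Rpower -exp_plus; apply: exp_le_mono.
  have -> : e j * ln x0 + - l = - (B * l / A).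
    rewrite /e /kexp -/A -/B /l; field; split; rlra.
  have := @div_ineq _ _ _ _ hA hB hr hl hr1.
  have -> : - B / r = - (B / r) by field; rlra.
  rlra.
have hmax : / x0 <= exp (- A / r).
  rewrite hinv; apply: exp_le_mono.
  have : A / r < l.
    apply: (Rmult_lt_reg_r r) => //; rewrite /Rdiv Rmult_assoc Rinv_l; rlra.
  have -> : - A / r = - (A / r) by field; rlra.
  rlra.
have hsum : \big[Rplus/0]_(j < s) (Rpower x0 (e j) * / x0) =
            \big[Rplus/0]_(j < s) Rpower x0 (e j) * / x0.
  exact: (esym (@GRing.mulr_suml R 'I_s (index_enum _) xpredT (fun j => Rpower x0 (e j)) (/ x0))).
have hle := @sumR_le _ _ _ hj.
rewrite big_ord_recr /=.
change (INR s + eps <= \big[Rplus/0]_(i < s) exp (- ln (INR (n (widen_ord (leqnSn s) i))) / r) + exp (- A / r)).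
rewrite hsum hS in hle.
have -> : INR s + eps = ((INR s + eps) * x0 - 1) * / x0 + / x0 by field; rlra.
rlra.
Qed.

End Real3.

Section Real4.
Local Open Scope R_scope.

Lemma exp_pow a m : exp a ^ m = exp (INR m * a).
Proof. by rewrite -(@Rpower_pow m _ (exp_pos a)) /Rpower ln_exp. Qed.

Lemma lam_R0 (s : nat) (eps : R) : (1 <= s)%nat -> 0 < eps < 1 ->
  exists R0 : nat, forall m : nat, (R0 <= m)%nat ->
    INR s.+1 * (INR s / (INR s + eps)) ^ m < 1.
Proof.
move=> s1 he.
have hs : 1 <= INR s by apply: (le_INR 1); apply/ssrnat.leP.
set lam := INR s / (INR s + eps).
have hl : 0 < lam < 1.
  rewrite /lam; split; first by apply: Rdiv_lt_0_compat; rlra.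
  apply: (Rmult_lt_reg_r (INR s + eps)); first rlra.
  rewrite /Rdiv Rmult_assoc Rinv_l; rlra.
have hS : 0 < INR s.+1 by apply: (lt_INR 0); apply/ssrnat.ltP.
have [R0 HR0] := @pow_lt_1_zero lam ltac:(rewrite Rabs_right; rlra) (/ INR s.+1)
   ltac:(apply: Rinv_0_lt_compat; rlra).
exists R0 => m hm.
have := HR0 m (ssrnat.leP hm).
rewrite Rabs_right; last by apply: Rle_ge; apply: pow_le; rlra.
move=> h.
have -> : 1 = INR s.+1 * / INR s.+1 by field; rlra.
apply: Rmult_lt_compat_l => //.
Qed.

End Real4.

Delimit Scope ring_scope with ring.
Delimit Scope R_scope with R.

Theorem theorem5 (s : nat) (eps : R) :
  1 <= s -> (0 < eps < 1)%R ->
  exists N : nat,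
    forall n : 'I_s.+1 -> nat,
      2 <= n ord0 ->
      (forall i j : 'I_s.+1, i <= j -> n i <= n j) ->
      N <= n ord_max ->
      forall x0 : R, (1 <= x0)%R -> Fx eps n x0 = 0%R ->
        ch_le (@Kadj s n) (rbound n x0).
Proof.
move=> s1 he.
have [R0 HR0] := @lam_R0 _ _ s1 he.
set lam := (INR s / (INR s + eps))%R in HR0.
set K := (INR R0 * (- ln eps))%R.
exists (Z.to_nat (up (exp K))).
move=> n n0 mono hN x0 hx hF.
have n2 : forall i, 2 <= n i.
  by move=> i; apply: leq_trans n0 _; apply: mono.
have monoj : forall j : 'I_s, n (widen_ord (leqnSn s) j) <= n ord_max.
  by move=> j; apply: mono; exact: ltnW (ltn_ord j).
have [hx1 hxe] := @x0_facts _ _ _ _ he n2 monoj hx hF.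
have hn : (1 < INR (n ord_max))%R by have := @INR_ge2 _ (n2 ord_max); rlra.
have [hr1 hr2] := @rbound_facts _ _ _ hx1 hn.
have hsum := @sum_t _ _ _ _ he n2 monoj hx hF.
set r := rbound n x0 in hr1 hr2 hsum *.
have hl := @ln_pos _ hx1.
have hA := @ln_pos _ hn.
set A := ln (INR (n ord_max)) in hA hr1 hr2 *.
have heps : (0 < - ln eps)%R.
  have := @ln_increasing eps 1 ltac:(rlra) ltac:(rlra); rewrite ln_1; rlra.
have hRr : R0 <= r.
  have [hup _] := archimed (exp K).
  have hE := exp_pos K.
  have hz : Z.lt 0 (up (exp K)) by apply: lt_0_IZR; rlra.
  have hN0 : INR (Z.to_nat (up (exp K))) = IZR (up (exp K)).
    by rewrite INR_IZR_INZ Znat.Z2Nat.id //; apply: Z.lt_le_incl.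
  have hNn := le_INR _ _ (ssrnat.leP hN).
  have hAK : (K < A)%R.
    have h1 := @ln_increasing _ _ hE hup.
    rewrite ln_exp in h1.
    have h2 : (ln (IZR (up (exp K))) <= A)%R.
      by apply: ln_le_mono; rewrite -?hN0; rlra.
    rlra.
  have hxl : (ln x0 <= - ln eps)%R.
    rewrite -ln_Rinv; last rlra.
    apply: ln_le_mono; first rlra.
    apply: (Rmult_le_reg_l eps); first rlra.
    rewrite Rinv_r; rlra.
  have hr0 := pos_INR r.
  have h3 : (INR r * ln x0 <= INR r * - ln eps)%R by apply: Rmult_le_compat_l.
  have h4 : (INR R0 < INR r)%R.
    apply: (Rmult_lt_reg_r (- ln eps)) => //; rewrite /K in hAK; rlra.
  by apply: ltnW; apply/ssrnat.ltP; apply: INR_lt.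
have hr0 : (0 < INR r)%R.
  case: (Rle_or_lt (INR r) 0) => // h.
  have : (INR r * ln x0 <= 0 * ln x0)%R by apply: Rmult_le_compat_r; rlra.
  rlra.
have hs : (1 <= INR s)%R by apply: (le_INR 1); apply/ssrnat.leP.
have hlam : (0 < lam < 1)%R.
  rewrite /lam; split; first by apply: Rdiv_lt_0_compat; rlra.
  apply: (Rmult_lt_reg_r (INR s + eps)); first rlra.
  rewrite /Rdiv Rmult_assoc Rinv_l; rlra.
set t := fun i => exp (- ln (INR (n i)) / INR r).
set q := fun i => (lam * t i)%R.
have hB : forall i, (0 < ln (INR (n i)))%R.
  by move=> i; apply: ln_pos; have := @INR_ge2 _ (n2 i); rlra.
have ht : forall i, (0 < t i <= 1)%R.
  move=> i; split; first exact: exp_pos.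
  rewrite -exp_0; apply: exp_le_mono.
  have := Rdiv_lt_0_compat _ _ (hB i) hr0.
  have -> : (- ln (INR (n i)) / INR r = - (ln (INR (n i)) / INR r))%R by field; rlra.
  rlra.
have hq : forall i, (0 <= q i <= 1)%ring.
  move=> i; have := ht i; move=> [h1 h2].
  apply/andP; split; apply/RleP; rewrite /q.
    change (0 <= lam * t i)%R.
    by apply: Rlt_le; apply: Rmult_lt_0_compat; rlra.
  change (lam * t i <= 1)%R.
  have : (lam * t i <= 1 * t i)%R by apply: Rmult_le_compat_r; rlra.
  rlra.
have hqs : (s%:R <= \sum_i q i)%ring.
  apply/RleP.
  change (Rle (s%:R)%ring (\big[Rplus/0%R]_i q i)); rewrite -INRE.
  have hm : \big[Rplus/0%R]_i q i = (lam * \big[Rplus/0%R]_i t i)%R.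
    change (\sum_i q i = lam * \sum_i t i)%ring; by rewrite GRing.mulr_sumr.
  rewrite hm.
  have hsum' : (INR s + eps <= \big[Rplus/0%R]_i t i)%R := hsum.
  have : (lam * (INR s + eps) <= lam * \big[Rplus/0%R]_i t i)%R.
    by apply: Rmult_le_compat_l; rlra.
  have -> : (lam * (INR s + eps) = INR s)%R by rewrite /lam; field; rlra.
  done.
have [p [p0 [p1 pq]]] := @normalize _ _ hq hqs.
exists r; split => //.
move=> L HL.
apply: (@key_color (Kvert n) s (fun v => tag v) L p r p0 p1 HL).
have H1 : (\sum_(v : Kvert n) (1 - p (tag v)) ^+ r <= \sum_(v : Kvert n) q (tag v) ^+ r)%ring.
  apply: ler_sum => v _; apply/RleP; rewrite -!RpowE; apply: pow_incr; split.
    by apply/RleP; apply: (@q_ge0 s.+1 p p0 p1).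
  by apply/RleP; apply: pq.
rewrite (@sum_Kvert s n (fun i => q i ^+ r)%ring) in H1.
have H3 : forall i, ((n i)%:R * q i ^+ r = lam ^+ r)%ring.
  move=> i; rewrite -INRE -!RpowE.
  change (INR (n i) * (lam * t i) ^ r = lam ^ r)%R.
  rewrite Rpow_mult_distr /t exp_pow.
  have -> : (INR r * (- ln (INR (n i)) / INR r) = - ln (INR (n i)))%R by field; rlra.
  have hni : (0 < INR (n i))%R by have := @INR_ge2 _ (n2 i); rlra.
  rewrite exp_Ropp exp_ln //; field; rlra.
have H4 : (\sum_i (n i)%:R * q i ^+ r = (s.+1)%:R * lam ^+ r)%ring.
  under eq_bigr => i _ do rewrite H3.
  by rewrite sumr_const card_ord mulr_natl.
rewrite H4 in H1.
apply: le_lt_trans H1 _.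
apply/RltP; rewrite -INRE -RpowE; exact: HR0.
Qed.
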